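(* Let $L$ be a Latin square of order $n$ and let $\sigma=(\alpha,\beta,\gamma;(123))$ be an autoparatopism of $L$. Suppose $(i,j,k)\in O(L)$, and let $a=o_{\alpha\beta\gamma}(i)$, $b=o_{\beta\gamma\alpha}(j)$ and $c=o_{\gamma\alpha\beta}(k)$. Then $$\operatorname{lcm}(a,b)=\operatorname{lcm}(a,c)=\operatorname{lcm}(b,c)=\operatorname{lcm}(a,b,c).$$
   Context: A Latin square $L$ of order $n$ is an $n\times n$ array with rows, columns and symbols indexed by $[n]$, in which each symbol occurs exactly once in each row and each column. Its set of triples is $O(L)=\{(i,j,L(i,j))\}$. Permutations act on the right and are composed left to right. A paratopism $\sigma=(\alpha,\beta,\gamma;\delta)$, with $\alpha,\beta,\gamma\in\mathcal S_n$ and $\delta\in\mathcal S_3$, maps $L$ to $L^\sigma$ by replacing each triple $(x,y,z)$ with $(x\alpha,y\beta,z\gamma)$ and then permuting coordinates according to $\delta$. For $\delta=(123)$ the triple $(x,y,z)$ maps to $(z\gamma,x\alpha,y\beta)$. $\sigma$ is an autoparatopism of $L$ if $L^\sigma=L$. $o_\pi(i)$ is the length of the cycle of $\pi$ containing $i$, with fixed points counting as cycles of length $1$. *)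

(* Defs.v *)
From mathcomp Require Import all_boot all_fingroup.
Set Implicit Arguments. Unset Strict Implicit. Unset Printing Implicit Defensive.

Definition latin_square (n : nat) (L : 'I_n -> 'I_n -> 'I_n) : Prop :=
  (forall (i k : 'I_n), exists! j : 'I_n, L i j = k) /\
  (forall (j k : 'I_n), exists! i : 'I_n, L i j = k).

Definition triples (n : nat) (L : 'I_n -> 'I_n -> 'I_n) : {set 'I_n * 'I_n * 'I_n} :=
  [set t : 'I_n * 'I_n * 'I_n | t.2 == L t.1.1 t.1.2].

Definition para123 (n : nat) (alpha beta gamma : {perm 'I_n})
  (T : {set 'I_n * 'I_n * 'I_n}) : {set 'I_n * 'I_n * 'I_n} :=
  [set (gamma t.2, alpha t.1.1, beta t.1.2) | t in T].

Definition autoparatopism123 (n : nat) (L : 'I_n -> 'I_n -> 'I_n)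
  (alpha beta gamma : {perm 'I_n}) : Prop :=
  para123 alpha beta gamma (triples L) = triples L.

Definition cyc_len (n : nat) (pi : {perm 'I_n}) (i : 'I_n) : nat := #|porbit pi i|.

(* Main.v *)
Require Import Defs.
From mathcomp Require Import all_boot all_fingroup.
Set Implicit Arguments. Unset Strict Implicit.
Local Open Scope group_scope.

Lemma fix_dvd (T : finType) (s : {perm T}) x m :
  ((s ^+ m) x == x) = (#|porbit s x| %| m).
Proof.
set d := #|porbit s x|.
have dP : (s ^+ d) x = x by rewrite permX iter_porbit.
have d0 : (0 < d)%N by rewrite lt0n card_porbit_neq0.
have dq : forall q, (s ^+ (d * q)) x = x.
  move=> q; rewrite expgM; elim: q => [|q IH]; first by rewrite expg0 perm1.
  by rewrite expgS permM dP IH.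
have -> : (s ^+ m) x = (s ^+ (m %% d)) x.
  by rewrite {1}(divn_eq m d) expgD permM (mulnC (m %/ d)%N) dq.
rewrite /dvdn; apply/eqP/eqP => [|->]; last by rewrite expg0 perm1.

have := ltn_pmod m d0; move: (m %% d) => r lt_r.
rewrite permX => Hr; case: r lt_r Hr => // r lt_r Hr.
have Ut := uniq_traject_porbit s x.
have := nth_uniq x (_ : 0 < size (traject s x d)) (_ : r.+1 < size (traject s x d)) Ut.
rewrite size_traject !nth_traject // => /(_ d0 lt_r).
by rewrite Hr eqxx.
Qed.

Theorem lemma3p3 (n : nat) (L : 'I_n -> 'I_n -> 'I_n)
  (alpha beta gamma : {perm 'I_n}) (i j k : 'I_n) :
  latin_square L ->
  autoparatopism123 L alpha beta gamma ->
  (i, j, k) \in triples L ->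
  let a := cyc_len (alpha * beta * gamma) i in
  let b := cyc_len (beta * gamma * alpha) j in
  let c := cyc_len (gamma * alpha * beta) k in
  [/\ lcmn a b = lcmn a (lcmn b c),
      lcmn a c = lcmn a (lcmn b c) &
      lcmn b c = lcmn a (lcmn b c)].
Proof.
move=> [Hrow Hcol] Hauto Hijk a b c.
set A := alpha * beta * gamma; set B := beta * gamma * alpha; set C := gamma * alpha * beta.
have step : forall x y z, (x, y, z) \in triples L ->
    (gamma z, alpha x, beta y) \in triples L.
  move=> x y z H; rewrite -Hauto /para123.
  by apply/imsetP; exists (x, y, z).
have iterP : forall m, ((A ^+ m) i, (B ^+ m) j, (C ^+ m) k) \in triples L.
  elim=> [|m IH]; first by rewrite !expg0 !perm1.
  rewrite !expgSr !permM.
  by have := step _ _ _ (step _ _ _ (step _ _ _ IH)).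
have tL : forall x y z, (x, y, z) \in triples L -> z = L x y.
  by move=> x y z; rewrite inE => /eqP.
have Lk := tL _ _ _ Hijk.
have cab : c %| lcmn a b.
  have := tL _ _ _ (iterP (lcmn a b)).
  have /eqP -> : (A ^+ lcmn a b) i == i by rewrite fix_dvd dvdn_lcml.
  have /eqP -> : (B ^+ lcmn a b) j == j by rewrite fix_dvd dvdn_lcmr.
  by rewrite -Lk => E; rewrite /c /cyc_len -fix_dvd E.
have abc : a %| lcmn b c.
  have := tL _ _ _ (iterP (lcmn b c)).
  have /eqP -> : (B ^+ lcmn b c) j == j by rewrite fix_dvd dvdn_lcml.
  have /eqP -> : (C ^+ lcmn b c) k == k by rewrite fix_dvd dvdn_lcmr.
  move=> E; have [r [_ ru]] := Hcol j k.
  have e1 := ru _ (esym E); have e2 := ru _ (esym Lk).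
  by rewrite /a /cyc_len -fix_dvd -e1 e2.
have bac : b %| lcmn a c.
  have := tL _ _ _ (iterP (lcmn a c)).
  have /eqP -> : (A ^+ lcmn a c) i == i by rewrite fix_dvd dvdn_lcml.
  have /eqP -> : (C ^+ lcmn a c) k == k by rewrite fix_dvd dvdn_lcmr.
  move=> E; have [r [_ ru]] := Hrow i k.
  have e1 := ru _ (esym E); have e2 := ru _ (esym Lk).
  by rewrite /b /cyc_len -fix_dvd -e1 e2.
have key : forall x y z, z %| lcmn x y -> lcmn x y = lcmn x (lcmn y z).
  by move=> x y z H; rewrite lcmnA (lcmn_idPl H).
split.
- exact: key.
- by rewrite (lcmnC b c); exact: key.
- by rewrite {1}(key _ _ _ abc) (lcmnC c a) lcmnCA.
Qed.
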